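(* Let $\rho_{12},\rho_{23},\rho_{34},\rho_{45}\in\mathbb{F}\setminus\{\frac12\}$, and let $\mathbf{A}$ be the 5-dimensional LV algebra with natural basis $e_1,\dots,e_5$ in which $e_ie_{i+1}=\rho_{i,i+1}e_i+(1-\rho_{i,i+1})e_{i+1}$ for $i=1,2,3,4$, and $e_ie_j=\frac12(e_i+e_j)$ for all other pairs $i,j$ (i.e. for $\{i,j\}\in\{\{1,3\},\{1,4\},\{1,5\},\{2,4\},\{2,5\},\{3,5\}\}$ and $i=j$). Then $\mathrm{Der}(\mathbf{A})=\{0\}$.
   Context: Let $\mathbb{F}$ be a field of characteristic different from $2$. A Lotka–Volterra (LV) algebra of dimension $5$ over $\mathbb{F}$ is a commutative (not necessarily associative) $\mathbb{F}$-algebra $\mathbf{A}$ with a basis $e_1,\dots,e_5$ (the natural basis) such that $e_ie_j=\alpha_{ij}e_i+\alpha_{ji}e_j$ with $\alpha_{ij}\in\mathbb{F}$, $\alpha_{ii}=\frac12$ and $\alpha_{ij}+\alpha_{ji}=1$ for all $i,j$. A derivation is a linear map $D:\mathbf{A}\to\mathbf{A}$ with $D(uv)=D(u)v+uD(v)$ for all $u,v$; $\mathrm{Der}(\mathbf{A})$ is the set of derivations. *)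

(* Defs.v *)
From HB Require Import structures.
From mathcomp Require Import all_boot all_order all_algebra.
Set Implicit Arguments. Unset Strict Implicit. Unset Printing Implicit Defensive.
Import GRing.Theory.
Local Open Scope ring_scope.

(* The algebra A is F^5, elements are row vectors 'rV[F]_5; the natural basis
   vector e_i is delta_mx 0 i. *)
Definition lv_e (F : fieldType) (i : 'I_5) : 'rV[F]_5 := delta_mx 0 i.

Definition lv_mul (F : fieldType) (alpha : 'I_5 -> 'I_5 -> F)
    (u v : 'rV[F]_5) : 'rV[F]_5 :=
  \sum_(i < 5) \sum_(j < 5)
     (u 0 i * v 0 j) *: (alpha i j *: lv_e F i + alpha j i *: lv_e F j).

Definition is_LV_alpha (F : fieldType) (alpha : 'I_5 -> 'I_5 -> F) : Prop :=
  (forall i, alpha i i = 2^-1) /\ (forall i j, alpha i j + alpha j i = 1).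

(* Structure constants of the chain LV algebra of the theorem (indices 0..4
   correspond to e_1..e_5). *)
Definition chain_alpha (F : fieldType) (r12 r23 r34 r45 : F)
    (i j : 'I_5) : F :=
  match (nat_of_ord i, nat_of_ord j) : nat * nat with
  | (0, 1)%N => r12 | (1, 0)%N => 1 - r12
  | (1, 2)%N => r23 | (2, 1)%N => 1 - r23
  | (2, 3)%N => r34 | (3, 2)%N => 1 - r34
  | (3, 4)%N => r45 | (4, 3)%N => 1 - r45
  | _ => 2^-1
  end.

(* A linear map D : A -> A is represented by a matrix acting on row vectors,
   u |-> u *m D. It is a derivation if D(uv) = D(u)v + uD(v). *)
Definition is_derivation (F : fieldType) (mul : 'rV[F]_5 -> 'rV[F]_5 -> 'rV[F]_5)
    (D : 'M[F]_5) : Prop :=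
  forall u v, mul u v *m D = mul (u *m D) v + mul u (v *m D).

(* Main.v *)
Require Import Defs.
From HB Require Import structures.
From mathcomp Require Import all_boot all_order all_algebra.
From mathcomp Require Import ring.
Import GRing.Theory.
Local Open Scope ring_scope.

Section S.
Variable F : fieldType.

Lemma e_entry a j : @lv_e F a 0 j = (a == j)%:R.
Proof. by rewrite /lv_e mxE eqxx eq_sym. Qed.

Lemma sum_delta (f : 'I_5 -> F) k : \sum_i (k == i)%:R * f i = f k.
Proof.
rewrite (bigD1 k) //= eqxx mul1r big1 ?addr0 // => i.
by rewrite eq_sym => /negbTE ->; rewrite mul0r.
Qed.

Lemma sum_delta_r (f : 'I_5 -> F) k : \sum_i f i * (k == i)%:R = f k.
Proof. by rewrite -[RHS]sum_delta; apply: eq_bigr => i _; rewrite mulrC. Qed.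

Lemma mul_entry (alpha : 'I_5 -> 'I_5 -> F) (u v : 'rV[F]_5) k : lv_mul alpha u v 0 k =
  u 0 k * \sum_j alpha k j * v 0 j + v 0 k * \sum_i alpha k i * u 0 i.
Proof.
rewrite /lv_mul summxE.
under eq_bigr => i _ do rewrite summxE.
under eq_bigr => i _ do under eq_bigr => j _ do rewrite !mxE eqxx /=.
transitivity (\sum_i \sum_j ((k == i)%:R * (u 0 i * v 0 j * alpha i j)
                + (k == j)%:R * (u 0 i * v 0 j * alpha j i))).
  apply: eq_bigr => i _; apply: eq_bigr => j _; ring.
under eq_bigr => i _ do rewrite big_split /=.
rewrite big_split /=; congr (_ + _).
  under eq_bigr => i _ do rewrite -mulr_sumr.
  by rewrite sum_delta mulr_sumr; apply: eq_bigr => j _; ring.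
rewrite exchange_big /=.
under eq_bigr => j _ do rewrite -mulr_sumr.
by rewrite sum_delta mulr_sumr; apply: eq_bigr => j _; ring.
Qed.

Lemma row_entry a (D : 'M[F]_5) j : (@lv_e F a *m D) 0 j = D a j.
Proof. by rewrite mxE; under eq_bigr => m _ do rewrite e_entry; rewrite sum_delta. Qed.

Lemma sum_e (f : 'I_5 -> F) x : \sum_j f j * @lv_e F x 0 j = f x.
Proof. by under eq_bigr => j _ do rewrite e_entry; rewrite sum_delta_r. Qed.

Lemma sum_row (f : 'I_5 -> F) a D : \sum_j f j * (@lv_e F a *m D) 0 j = \sum_j f j * D a j.
Proof. by apply: eq_bigr => j _; rewrite row_entry. Qed.

Lemma key (alpha : 'I_5 -> 'I_5 -> F) (D : 'M[F]_5) (H : is_derivation (lv_mul alpha) D) a b k :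
 alpha a b * D a k + alpha b a * D b k =
 D a k * alpha k b + (b == k)%:R * (\sum_j alpha k j * D a j)
 + ((a == k)%:R * (\sum_j alpha k j * D b j) + D b k * alpha k a).
Proof.
have := congr1 (fun M : 'rV_5 => M 0 k) (H (@lv_e F a) (@lv_e F b)).
rewrite /= [in X in X = _]mxE [in X in _ = X]mxE => E.
have L : \sum_j lv_mul alpha (@lv_e F a) (@lv_e F b) 0 j * D j k
   = alpha a b * D a k + alpha b a * D b k.
  under eq_bigr => j _ do rewrite mul_entry.
  under eq_bigr => j _ do under eq_bigr => i _ do rewrite e_entry.
  under eq_bigr => j _ do under [in X in _ + X]eq_bigr => i _ do rewrite e_entry.
  under eq_bigr => j _ do rewrite !sum_delta_r !e_entry.
  under eq_bigr => j _ do rewrite mulrDl -!mulrA.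
  by rewrite big_split /= !sum_delta.
rewrite L !mul_entry !row_entry in E.
rewrite !sum_e !sum_row !e_entry in E.
rewrite E; ring.
Qed.

End S.
Section S2.
Variable F : fieldType.
Variable alpha : 'I_5 -> 'I_5 -> F.
Variable D : 'M[F]_5.
Hypothesis H : is_derivation (lv_mul alpha) D.
Hypothesis char2 : (2%:R : F) != 0.

Lemma neighbor a k : a != k -> alpha a a = 2^-1 -> alpha k a != 2^-1 -> D a k = 0.
Proof.
move=> nak haa hka.
have := @key F alpha D H a a k; rewrite (negbTE nak) haa.
move/eqP; rewrite -subr_eq0 => /eqP E.
have : (2^-1 - alpha k a) * 2%:R * D a k = 0 by rewrite -E /=; ring.
move/eqP; rewrite !mulf_eq0 subr_eq0 eq_sym (negbTE hka) (negbTE char2) /=.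
by move/eqP.
Qed.

Lemma third a b k : a != b -> k != a -> k != b -> D b k = 0 ->
  alpha a b != alpha k b -> D a k = 0.
Proof.
move=> nab nka nkb Dbk hne.
have := @key F alpha D H a b k; rewrite eq_sym (negbTE nkb) eq_sym (negbTE nka) Dbk.
move/eqP; rewrite -subr_eq0 => /eqP E.
have : (alpha a b - alpha k b) * D a k = 0 by rewrite -E /=; ring.
move/eqP; rewrite !mulf_eq0 subr_eq0 (negbTE hne) /=.
by move/eqP.
Qed.

Lemma diag a : alpha a a = 2^-1 -> (forall j, j != a -> D a j = 0) -> D a a = 0.
Proof.
move=> haa hz.
have := @key F alpha D H a a a; rewrite eqxx haa.
rewrite (bigD1 a) //= big1; last by move=> j /hz ->; rewrite mulr0.
rewrite haa addr0.
move/eqP; rewrite -subr_eq0 => /eqP E.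
have : - (2^-1 * 2%:R * D a a) = 0 by rewrite -E /=; ring.
move/eqP; rewrite oppr_eq0 !mulf_eq0 invr_eq0 (negbTE char2) /=.
by move/eqP.
Qed.

End S2.

Definition o0 : 'I_5 := @Ordinal 5 0 isT.
Definition o1 : 'I_5 := @Ordinal 5 1 isT.
Definition o2 : 'I_5 := @Ordinal 5 2 isT.
Definition o3 : 'I_5 := @Ordinal 5 3 isT.
Definition o4 : 'I_5 := @Ordinal 5 4 isT.

Lemma half_ne (F : fieldType) (char2 : (2%:R : F) != 0) (r : F) :
  r != 2^-1 -> [/\ 2^-1 != r, 1 - r != 2^-1 & 2^-1 != 1 - r].
Proof.
move=> hr.
have h1 : 1 - r != 2^-1.
  apply/eqP => E; move/eqP: hr; apply.
  have -> : r = 1 - (1 - r) by ring.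
  rewrite E; field; exact: char2.
by split; rewrite // eq_sym.
Qed.

Lemma ord_ind (P : 'I_5 -> Prop) : P o0 -> P o1 -> P o2 -> P o3 -> P o4 -> forall i, P i.
Proof.
move=> p0 p1 p2 p3 p4 [[|[|[|[|[|?]]]]] Hi] //.
- by rewrite (_ : Ordinal Hi = o0) //; apply: val_inj.
- by rewrite (_ : Ordinal Hi = o1) //; apply: val_inj.
- by rewrite (_ : Ordinal Hi = o2) //; apply: val_inj.
- by rewrite (_ : Ordinal Hi = o3) //; apply: val_inj.
- by rewrite (_ : Ordinal Hi = o4) //; apply: val_inj.
Qed.

Theorem mainTheorem14 (F : fieldType) (char2 : (2%:R : F) != 0)
    (r12 r23 r34 r45 : F)
    (h12 : r12 != 2^-1) (h23 : r23 != 2^-1)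
    (h34 : r34 != 2^-1) (h45 : r45 != 2^-1)
    (D : 'M[F]_5) :
  is_derivation (lv_mul (chain_alpha r12 r23 r34 r45)) D -> D = 0.
Proof.
move=> H.
have [g12 i12 j12] := @half_ne F char2 _ h12.
have [g23 i23 j23] := @half_ne F char2 _ h23.
have [g34 i34 j34] := @half_ne F char2 _ h34.
have [g45 i45 j45] := @half_ne F char2 _ h45.
have N := @neighbor _ _ _ H char2.
have T := @third _ _ _ H.
have n01 : D o0 o1 = 0 := N o0 o1 isT erefl i12.
have n10 : D o1 o0 = 0 := N o1 o0 isT erefl h12.
have n12 : D o1 o2 = 0 := N o1 o2 isT erefl i23.
have n21 : D o2 o1 = 0 := N o2 o1 isT erefl h23.
have n23 : D o2 o3 = 0 := N o2 o3 isT erefl i34.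
have n32 : D o3 o2 = 0 := N o3 o2 isT erefl h34.
have n34 : D o3 o4 = 0 := N o3 o4 isT erefl i45.
have n43 : D o4 o3 = 0 := N o4 o3 isT erefl h45.
have n03 : D o0 o3 = 0 := T o0 o2 o3 isT isT isT n23 j34.
have n04 : D o0 o4 = 0 := T o0 o3 o4 isT isT isT n34 j45.
have n02 : D o0 o2 = 0 := T o0 o3 o2 isT isT isT n32 g34.
have n13 : D o1 o3 = 0 := T o1 o4 o3 isT isT isT n43 g45.
have n14 : D o1 o4 = 0 := T o1 o3 o4 isT isT isT n34 j45.
have n30 : D o3 o0 = 0 := T o3 o1 o0 isT isT isT n10 g12.
have n31 : D o3 o1 = 0 := T o3 o0 o1 isT isT isT n01 j12.
have n40 : D o4 o0 = 0 := T o4 o1 o0 isT isT isT n10 g12.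
have n41 : D o4 o1 = 0 := T o4 o0 o1 isT isT isT n01 j12.
have n42 : D o4 o2 = 0 := T o4 o1 o2 isT isT isT n12 j23.
have n24 : D o2 o4 = 0 := T o2 o1 o4 isT isT isT n14 i23.
have n20 : D o2 o0 = 0 := T o2 o3 o0 isT isT isT n30 h34.
have off : forall i j : 'I_5, j != i -> D i j = 0.
  apply: ord_ind; apply: ord_ind => hne;
    first [assumption | by rewrite eqxx in hne].
have dg : forall i : 'I_5, D i i = 0.
  move=> i; apply: (@diag _ _ _ H char2).
    by move: i; apply: ord_ind.
  by move=> j; apply: off.
apply/matrixP => i j; rewrite mxE.
by case: (eqVneq j i) => [->|/off ->].
Qed.
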